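(* Let $X^{(\kappa)}_N$ be a twisted affine type with associated simply laced diagram $X_N$ and diagram automorphism $\sigma$. Let $\mathcal{J}^\sigma$ be the ideal of $\mathcal{T}(X_N)$ (with spectral parameter domain $\mathbb{C}_\hbar$) generated by $\hat T^{(a)}_m(u)-\hat T^{(\sigma(a))}_m(u+\Omega)$ for all $a\in I$, $m\in\mathbb{N}$, $u\in\mathbb{C}_\hbar$. Then there is a ring isomorphism $\mathcal{T}(X_N)/\mathcal{J}^\sigma\to\mathcal{T}(X^{(\kappa)}_N)$ sending the class of $\hat T^{(a)}_m(u)$ to $T^{(a)}_m(u)$ for $a\in I_\sigma$, $m\in\mathbb{N}$, $u\in\mathbb{C}_{\kappa_a\hbar}$ (the class of $\hat T^{(a)}_m(u)$ for $a\in I_\sigma$ depends only on $u$ modulo $(2\pi\sqrt{-1}/\kappa_a\hbar)\mathbb{Z}$).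
   Context: Fix $\hbar\in\mathbb{C}\setminus2\pi\sqrt{-1}\mathbb{Q}$; $\mathbb{C}_c:=\mathbb{C}/(2\pi\sqrt{-1}/c)\mathbb{Z}$. The pairs: $A^{(2)}_{2r-1}$ ($r\ge2$): $X_N=A_{2r-1}$ (chain), $\sigma(a)=2r-a$, $\kappa=2$; $A^{(2)}_{2r}$ ($r\ge1$): $X_N=A_{2r}$, $\sigma(a)=2r+1-a$, $\kappa=2$; $D^{(2)}_{r+1}$ ($r\ge3$): $X_N=D_{r+1}$ (chain $1-\cdots-(r-1)$ with $r,r+1$ joined to $r-1$), $\sigma$ swaps $r,r+1$, $\kappa=2$; $E^{(2)}_6$: $X_N=E_6$ (chain $1-2-3-5-6$, $4$ joined to $3$), $\sigma$ swaps $1\leftrightarrow6$, $2\leftrightarrow5$, $\kappa=2$; $D^{(3)}_4$: $X_N=D_4$ ($1,3,4$ joined to $2$), $\sigma:1\mapsto3\mapsto4\mapsto1$, $\kappa=3$. $I_\sigma=\{1,\dots,r\}$ in the first three cases, $\{1,2,3,4\}$ for $E^{(2)}_6$, $\{1,2\}$ for $D^{(3)}_4$. $\kappa_a=\kappa$ if $\sigma(a)=a$, else $1$. $\Omega=2\pi\sqrt{-1}/(\kappa\hbar)$. $\mathcal{T}(X_N)$: commutative ring with generators $\hat T^{(a)}_m(u)^{\pm1}$ ($a\in I$, $m\in\mathbb{N}$, $u\in\mathbb{C}_\hbar$) and relations $\hat T^{(a)}_m(u-1)\hat T^{(a)}_m(u+1)=\hat T^{(a)}_{m-1}(u)\hat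 T^{(a)}_{m+1}(u)+\prod_{b:C_{ab}=-1}\hat T^{(b)}_m(u)$, $\hat T^{(a)}_0=1$, $C$ the Cartan matrix of $X_N$. $\mathcal{T}(X^{(\kappa)}_N)$: commutative ring with generators $T^{(a)}_m(u)^{\pm1}$ ($a\in I_\sigma$, $m\in\mathbb{N}$, $u\in\mathbb{C}_{\kappa_a\hbar}$) and relations $T^{(a)}_m(u-1)T^{(a)}_m(u+1)=T^{(a)}_{m-1}(u)T^{(a)}_{m+1}(u)+M^{(a)}_m(u)$, with $T^{(0)}_m=T^{(a)}_0=1$, where: $A^{(2)}_{2r-1}$: $M^{(a)}_m=T^{(a-1)}_m(u)T^{(a+1)}_m(u)$ ($a\le r-1$), $M^{(r)}_m=T^{(r-1)}_m(u)T^{(r-1)}_m(u+\Omega)$; $A^{(2)}_{2r}$: $M^{(a)}_m=T^{(a-1)}_m(u)T^{(a+1)}_m(u)$ ($a\le r-1$), $M^{(r)}_m=T^{(r-1)}_m(u)T^{(r)}_m(u+\Omega)$; $D^{(2)}_{r+1}$: $M^{(a)}_m=T^{(a-1)}_m(u)T^{(a+1)}_m(u)$ ($a\le r-2$), $M^{(r-1)}_m=T^{(r-2)}_m(u)T^{(r)}_m(u)T^{(r)}_m(u+\Omega)$, $M^{(r)}_m=T^{(r-1)}_m(u)$; $E^{(2)}_6$: $M^{(1)}_m=T^{(2)}_m(u)$, $M^{(2)}_m=T^{(1)}_m(u)T^{(3)}_m(u)$, $M^{(3)}_m=T^{(2)}_m(u)T^{(2)}_m(u+\Omega)T^{(4)}_m(u)$,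 $M^{(4)}_m=T^{(3)}_m(u)$; $D^{(3)}_4$: $M^{(1)}_m=T^{(2)}_m(u)$, $M^{(2)}_m=T^{(1)}_m(u)T^{(1)}_m(u-\Omega)T^{(1)}_m(u+\Omega)$. *)

(* Defs.v *)
From Stdlib Require Import Reals.
From HB Require Import structures.
From mathcomp Require Import all_boot all_order all_algebra.
From mathcomp Require Import complex.
From mathcomp Require Import boolp Rstruct.

Set Implicit Arguments.
Unset Strict Implicit.
Unset Printing Implicit Defensive.

Import Order.TTheory GRing.Theory Num.Theory.
Local Open Scope ring_scope.

Section Quot.
Variables (T : Type) (e : T -> T -> Prop).

Definition quot := {P : T -> Prop | exists x, P = e x}.
Definition qpi (x : T) : quot := exist _ (e x) (ex_intro _ x erefl).
Definition qrepr (q : quot) : T := proj1_sig (cid (proj2_sig q)).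

Definition equivalence_rel :=
  [/\ forall x, e x x, forall x y, e x y -> e y x &
      forall x y z, e x y -> e y z -> e x z].

Lemma qreprK (q : quot) : qpi (qrepr q) = q.
Proof.
case: q => P hP; rewrite /qrepr /qpi /=.
case: (cid hP) => x /= Px; exact: eq_exist.
Qed.

Lemma qpi_eq (x y : T) : equivalence_rel -> e x y -> qpi x = qpi y.
Proof.
case=> r s t exy; apply: eq_exist.
apply/funext => z; apply/propext; split; first by move/(t _ _ _ (s _ _ exy)).
exact: t exy.
Qed.

Lemma qpi_eq_inv (x y : T) : equivalence_rel -> qpi x = qpi y -> e x y.
Proof.
case=> r s t /(congr1 (@proj1_sig _ _)) /= exy.
by rewrite exy; apply: r.
Qed.

End Quot.

Lemma quot_ind (T : Type) (e : T -> T -> Prop) (P : quot e -> Prop) :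
  (forall x, P (qpi e x)) -> forall q, P q.
Proof. by move=> H q; rewrite -(qreprK q). Qed.

(* The free commutative ring Z[g^{+-1} : g in G] on a type of          *)
(* generators G, each generator being invertible (Laurent polynomials). *)
Section FreeRing.
Variable G : Type.

Inductive fterm :=
| fVar of G | fInv of G | fZero | fOne
| fAdd of fterm & fterm | fOpp of fterm | fMul of fterm & fterm.

Inductive fcong : fterm -> fterm -> Prop :=
| fc_refl x : fcong x x
| fc_sym x y : fcong x y -> fcong y x
| fc_trans x y z : fcong x y -> fcong y z -> fcong x z
| fc_add x x' y y' : fcong x x' -> fcong y y' -> fcong (fAdd x y) (fAdd x' y')
| fc_opp x x' : fcong x x' -> fcong (fOpp x) (fOpp x')
| fc_mul x x' y y' : fcong x x' -> fcong y y' -> fcong (fMul x y) (fMul x' y')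
| fc_addA x y z : fcong (fAdd x (fAdd y z)) (fAdd (fAdd x y) z)
| fc_addC x y : fcong (fAdd x y) (fAdd y x)
| fc_add0 x : fcong (fAdd fZero x) x
| fc_addN x : fcong (fAdd (fOpp x) x) fZero
| fc_mulA x y z : fcong (fMul x (fMul y z)) (fMul (fMul x y) z)
| fc_mulC x y : fcong (fMul x y) (fMul y x)
| fc_mul1 x : fcong (fMul fOne x) x
| fc_mulDl x y z : fcong (fMul (fAdd x y) z) (fAdd (fMul x z) (fMul y z))
| fc_inv g : fcong (fMul (fVar g) (fInv g)) fOne.

Lemma fcong_equiv : equivalence_rel fcong.
Proof. by split; [exact: fc_refl | exact: fc_sym | exact: fc_trans]. Qed.

Definition freeRing := quot fcong.
HB.instance Definition _ := gen_eqMixin freeRing.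
HB.instance Definition _ := gen_choiceMixin freeRing.

Local Notation fpi := (qpi fcong).
Local Notation frep := (qrepr (e:=fcong)).

Definition fr_zero : freeRing := fpi fZero.
Definition fr_one : freeRing := fpi fOne.
Definition fr_add (x y : freeRing) : freeRing := fpi (fAdd (frep x) (frep y)).
Definition fr_opp (x : freeRing) : freeRing := fpi (fOpp (frep x)).
Definition fr_mul (x y : freeRing) : freeRing := fpi (fMul (frep x) (frep y)).

Lemma frep_cong x : fcong (frep (fpi x)) x.
Proof. by apply: (qpi_eq_inv fcong_equiv); rewrite qreprK. Qed.

Lemma fr_addE x y : fr_add (fpi x) (fpi y) = fpi (fAdd x y).
Proof. by apply: (qpi_eq fcong_equiv); apply: fc_add; apply: frep_cong. Qed.
Lemma fr_oppE x : fr_opp (fpi x) = fpi (fOpp x).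
Proof. by apply: (qpi_eq fcong_equiv); apply: fc_opp; apply: frep_cong. Qed.
Lemma fr_mulE x y : fr_mul (fpi x) (fpi y) = fpi (fMul x y).
Proof. by apply: (qpi_eq fcong_equiv); apply: fc_mul; apply: frep_cong. Qed.

Lemma fr_addA : associative fr_add.
Proof.
elim/quot_ind=> x; elim/quot_ind=> y; elim/quot_ind=> z.
rewrite !fr_addE; apply: (qpi_eq fcong_equiv); exact: fc_addA.
Qed.
Lemma fr_addC : commutative fr_add.
Proof.
elim/quot_ind=> x; elim/quot_ind=> y.
rewrite !fr_addE; apply: (qpi_eq fcong_equiv); exact: fc_addC.
Qed.
Lemma fr_add0 : left_id fr_zero fr_add.
Proof.
elim/quot_ind=> x; rewrite /fr_zero fr_addE.
apply: (qpi_eq fcong_equiv); exact: fc_add0.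
Qed.
Lemma fr_addN : left_inverse fr_zero fr_opp fr_add.
Proof.
elim/quot_ind=> x; rewrite fr_oppE fr_addE.
apply: (qpi_eq fcong_equiv); exact: fc_addN.
Qed.

HB.instance Definition _ :=
  GRing.isZmodule.Build freeRing fr_addA fr_addC fr_add0 fr_addN.

Lemma fr_mulA : associative fr_mul.
Proof.
elim/quot_ind=> x; elim/quot_ind=> y; elim/quot_ind=> z.
rewrite !fr_mulE; apply: (qpi_eq fcong_equiv); exact: fc_mulA.
Qed.
Lemma fr_mulC : commutative fr_mul.
Proof.
elim/quot_ind=> x; elim/quot_ind=> y.
rewrite !fr_mulE; apply: (qpi_eq fcong_equiv); exact: fc_mulC.
Qed.
Lemma fr_mul1 : left_id fr_one fr_mul.
Proof.
elim/quot_ind=> x; rewrite /fr_one fr_mulE.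
apply: (qpi_eq fcong_equiv); exact: fc_mul1.
Qed.
Lemma fr_mulDl : left_distributive fr_mul fr_add.
Proof.
elim/quot_ind=> x; elim/quot_ind=> y; elim/quot_ind=> z.
rewrite !(fr_addE, fr_mulE).
apply: (qpi_eq fcong_equiv); exact: fc_mulDl.
Qed.

HB.instance Definition _ :=
  GRing.Zmodule_isComPzRing.Build freeRing fr_mulA fr_mulC fr_mul1 fr_mulDl.

Definition fgen (g : G) : freeRing := fpi (fVar g).
Definition fgen_inv (g : G) : freeRing := fpi (fInv g).

End FreeRing.

Section IdealQuotient.
Variables (R : comPzRingType) (S : R -> Prop).

Definition in_ideal_gen (x : R) : Prop :=
  exists s : seq (R * R),
    (forall p, p \in s -> S p.2) /\ x = \sum_(p <- s) p.1 * p.2.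

Definition iqrel (x y : R) : Prop := in_ideal_gen (x - y).

Lemma ideal_gen0 : in_ideal_gen 0.
Proof. by exists [::]; rewrite big_nil. Qed.

Lemma ideal_genD x y : in_ideal_gen x -> in_ideal_gen y -> in_ideal_gen (x + y).
Proof.
move=> [s [hs ->]] [t [ht ->]]; exists (s ++ t); rewrite big_cat; split=> //.
by move=> p; rewrite mem_cat => /orP[/hs|/ht].
Qed.

Lemma ideal_genM x z : in_ideal_gen x -> in_ideal_gen (z * x).
Proof.
move=> [s [hs ->]]; exists [seq (z * p.1, p.2) | p <- s]; split.
  by move=> p /mapP[q /hs qs ->].
by rewrite big_map mulr_sumr; apply: eq_bigr => p _; rewrite mulrA.
Qed.

Lemma ideal_genN x : in_ideal_gen x -> in_ideal_gen (- x).
Proof. by move=> /(ideal_genM (-1)); rewrite mulN1r. Qed.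

Lemma iqrel_equiv : equivalence_rel iqrel.
Proof.
split.
- by move=> x; rewrite /iqrel subrr; exact: ideal_gen0.
- by move=> x y /ideal_genN; rewrite /iqrel opprB.
- move=> x y z hxy hyz; have := ideal_genD hxy hyz.
  by rewrite /iqrel addrA subrK.
Qed.

Definition ringQuot := quot iqrel.
HB.instance Definition _ := gen_eqMixin ringQuot.
HB.instance Definition _ := gen_choiceMixin ringQuot.

Definition rq (x : R) : ringQuot := qpi iqrel x.
Local Notation qrep := (qrepr (e:=iqrel)).

Definition rq_zero : ringQuot := rq 0.
Definition rq_one : ringQuot := rq 1.
Definition rq_add (x y : ringQuot) : ringQuot := rq (qrep x + qrep y).
Definition rq_opp (x : ringQuot) : ringQuot := rq (- qrep x).
Definition rq_mul (x y : ringQuot) : ringQuot := rq (qrep x * qrep y).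

Lemma rq_rel x : iqrel (qrep (rq x)) x.
Proof. by apply: (qpi_eq_inv iqrel_equiv); rewrite qreprK. Qed.

Lemma rq_addE x y : rq_add (rq x) (rq y) = rq (x + y).
Proof.
apply: (qpi_eq iqrel_equiv); have := ideal_genD (rq_rel x) (rq_rel y).
by rewrite /iqrel opprD addrACA.
Qed.
Lemma rq_oppE x : rq_opp (rq x) = rq (- x).
Proof.
apply: (qpi_eq iqrel_equiv); have := ideal_genN (rq_rel x).
by rewrite /iqrel opprK opprB addrC.
Qed.
Lemma rq_mulE x y : rq_mul (rq x) (rq y) = rq (x * y).
Proof.
apply: (qpi_eq iqrel_equiv).
have := ideal_genD (ideal_genM (qrep (rq y)) (rq_rel x))
                   (ideal_genM x (rq_rel y)).
rewrite /iqrel !mulrBr [qrep (rq y) * x]mulrC [x * qrep (rq y)]mulrC.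
by rewrite addrA subrK [qrep (rq y) * _]mulrC.
Qed.

Lemma rq_addA : associative rq_add.
Proof.
by elim/quot_ind=> x; elim/quot_ind=> y; elim/quot_ind=> z;
  rewrite -!/(rq _) !rq_addE addrA.
Qed.
Lemma rq_addC : commutative rq_add.
Proof.
by elim/quot_ind=> x; elim/quot_ind=> y; rewrite -!/(rq _) !rq_addE addrC.
Qed.
Lemma rq_add0 : left_id rq_zero rq_add.
Proof. by elim/quot_ind=> x; rewrite -!/(rq _) /rq_zero rq_addE add0r. Qed.
Lemma rq_addN : left_inverse rq_zero rq_opp rq_add.
Proof.
by elim/quot_ind=> x; rewrite -!/(rq _) rq_oppE rq_addE addNr.
Qed.

HB.instance Definition _ :=
  GRing.isZmodule.Build ringQuot rq_addA rq_addC rq_add0 rq_addN.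

Lemma rq_mulA : associative rq_mul.
Proof.
by elim/quot_ind=> x; elim/quot_ind=> y; elim/quot_ind=> z;
  rewrite -!/(rq _) !rq_mulE mulrA.
Qed.
Lemma rq_mulC : commutative rq_mul.
Proof.
by elim/quot_ind=> x; elim/quot_ind=> y; rewrite -!/(rq _) !rq_mulE mulrC.
Qed.
Lemma rq_mul1 : left_id rq_one rq_mul.
Proof. by elim/quot_ind=> x; rewrite -!/(rq _) /rq_one rq_mulE mul1r. Qed.
Lemma rq_mulDl : left_distributive rq_mul rq_add.
Proof.
by elim/quot_ind=> x; elim/quot_ind=> y; elim/quot_ind=> z;
  rewrite -!/(rq _) !(rq_addE, rq_mulE) mulrDl.
Qed.

HB.instance Definition _ :=
  GRing.Zmodule_isComPzRing.Build ringQuot rq_mulA rq_mulC rq_mul1 rq_mulDl.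

End IdealQuotient.

(* A commutative ring presented by (invertible) generators G and relations
   lhs = rhs, encoded as the set rel of elements lhs - rhs of the free ring. *)
Definition presentedRing (G : Type) (rel : freeRing G -> Prop) :=
  ringQuot rel.

Unset Implicit Arguments.

Local Open Scope complex_scope.

Definition CC : Type := R[i].
Definition twopii : CC := (2 * PI)%R%:C * 'i.

Definition cmod_rel (c : CC) (u v : CC) : Prop :=
  exists k : int, u - v = k%:~R * (twopii / c).

Definition Cmod (c : CC) := quot (cmod_rel c).
Definition cproj (c : CC) (z : CC) : Cmod c := qpi (cmod_rel c) z.

Local Close Scope complex_scope.

Inductive twisted_type :=
| A2odd of nat   (* A^(2)_(2r-1), r >= 2 *)
| A2even of nat  (* A^(2)_(2r),   r >= 1 *)
| D2 of nat      (* D^(2)_(r+1),  r >= 3 *)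
| E62
| D43.

Definition tt_valid (t : twisted_type) : bool :=
  match t with
  | A2odd r => 2 <= r
  | A2even r => 1 <= r
  | D2 r => 3 <= r
  | E62 | D43 => true
  end%N.

(* the rank N of the simply laced diagram X_N; its nodes are 1, ..., N *)
Definition rankN (t : twisted_type) : nat :=
  match t with
  | A2odd r => (2 * r).-1
  | A2even r => 2 * r
  | D2 r => r.+1
  | E62 => 6
  | D43 => 4
  end.

Definition is_node (t : twisted_type) (a : nat) : bool := (1 <= a <= rankN t)%N.

(* one orientation of each edge of the Dynkin diagram X_N *)
Definition edge1 (t : twisted_type) (a b : nat) : bool :=
  match t with
  | A2odd _ | A2even _ => (1 <= a)%N && (b == a.+1) && (b <= rankN t)%N
  | D2 r => ((1 <= a <= r.-1)%N && (b == a.+1)) || ((a == r.-1) && (b == r.+1))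
  | E62 => ((a, b) \in [:: (1, 2); (2, 3); (3, 5); (5, 6); (3, 4)])%N
  | D43 => ((a, b) \in [:: (1, 2); (3, 2); (4, 2)])%N
  end.

(* C_ab = -1 in the Cartan matrix of X_N *)
Definition adj (t : twisted_type) (a b : nat) : bool := edge1 t a b || edge1 t b a.

Definition sigma (t : twisted_type) (a : nat) : nat :=
  match t with
  | A2odd r => (2 * r - a)%N
  | A2even r => ((2 * r).+1 - a)%N
  | D2 r => if a == r then r.+1 else if a == r.+1 then r else a
  | E62 => match a with 1 => 6 | 6 => 1 | 2 => 5 | 5 => 2 | _ => a end
  | D43 => match a with 1 => 3 | 3 => 4 | 4 => 1 | _ => a end
  end%N.

Definition kappa (t : twisted_type) : nat :=
  match t with D43 => 3 | _ => 2 end.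

Definition in_Isig (t : twisted_type) (a : nat) : bool :=
  match t with
  | A2odd r | A2even r | D2 r => (1 <= a <= r)%N
  | E62 => (1 <= a <= 4)%N
  | D43 => (1 <= a <= 2)%N
  end.

Definition kappa_a (t : twisted_type) (a : nat) : nat :=
  if sigma t a == a then kappa t else 1%N.

Definition Omega (t : twisted_type) (hb : CC) : CC :=
  twopii / ((kappa t)%:R * hb).

Record ugen (t : twisted_type) (hb : CC) := UGen {
  ug_a : nat; ug_m : nat;
  ug_P : is_node t ug_a && (0 < ug_m)%N;
  ug_u : Cmod hb }.

(* hatT^(a)_m(z mod (2 pi i/hbar)Z) in the free ring, with the conventions
   hatT^(a)_0 = 1 (and 1 outside the range of nodes). *)
Definition uT (t : twisted_type) (hb : CC) (a m : nat) (z : CC)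
  : freeRing (ugen t hb) :=
  match is_node t a && (0 < m)%N as b
        return is_node t a && (0 < m)%N = b -> freeRing (ugen t hb) with
  | true => fun H => fgen (UGen t hb a m H (cproj hb z))
  | false => fun _ => 1
  end erefl.

Definition urel (t : twisted_type) (hb : CC) (x : freeRing (ugen t hb)) : Prop :=
  exists (a m : nat) (z : CC), is_node t a /\ (0 < m)%N /\
    x = uT t hb a m (z - 1) * uT t hb a m (z + 1)
        - (uT t hb a m.-1 z * uT t hb a m.+1 z
           + \prod_(1 <= b < (rankN t).+1 | adj t a b) uT t hb b m z).

Definition TX (t : twisted_type) (hb : CC) := presentedRing (urel t hb).

Definition hatT (t : twisted_type) (hb : CC) (a m : nat) (z : CC) : TX t hb :=
  @rq _ (urel t hb) (uT t hb a m z).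

Definition Jsig (t : twisted_type) (hb : CC) (x : TX t hb) : Prop :=
  exists (a m : nat) (z : CC), is_node t a /\ (0 < m)%N /\
    x = hatT t hb a m z - hatT t hb (sigma t a) m (z + Omega t hb).

Definition TXquot (t : twisted_type) (hb : CC) := ringQuot (Jsig t hb).

Record tgen (t : twisted_type) (hb : CC) := TGen {
  tg_a : nat; tg_m : nat;
  tg_P : in_Isig t tg_a && (0 < tg_m)%N;
  tg_u : Cmod ((kappa_a t tg_a)%:R * hb) }.

(* T^(b)_m(z mod (2 pi i/(kappa_b hbar))Z), with T^(0)_m = T^(b)_0 = 1 *)
Definition tT (t : twisted_type) (hb : CC) (b m : nat) (z : CC)
  : freeRing (tgen t hb) :=
  match in_Isig t b && (0 < m)%N as c
        return in_Isig t b && (0 < m)%N = c -> freeRing (tgen t hb) with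
  | true => fun H => fgen (TGen t hb b m H (cproj ((kappa_a t b)%:R * hb) z))
  | false => fun _ => 1
  end erefl.

Definition Mtw (t : twisted_type) (hb : CC) (a m : nat) (z : CC)
  : freeRing (tgen t hb) :=
  let T b w := tT t hb b m w in
  let O := Omega t hb in
  match t with
  | A2odd r =>
      if (a <= r.-1)%N then T a.-1 z * T a.+1 z
      else T r.-1 z * T r.-1 (z + O)
  | A2even r =>
      if (a <= r.-1)%N then T a.-1 z * T a.+1 z
      else T r.-1 z * T r (z + O)
  | D2 r =>
      if (a <= r.-2)%N then T a.-1 z * T a.+1 z
      else if a == r.-1 then T r.-2 z * T r z * T r (z + O)
      else T r.-1 z
  | E62 =>
      match a with
      | 1 => T 2 z
      | 2 => T 1 z * T 3 z
      | 3 => T 2 z * T 2 (z + O) * T 4 z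
      | _ => T 3 z
      end
  | D43 =>
      match a with
      | 1 => T 2 z
      | _ => T 1 z * T 1 (z - O) * T 1 (z + O)
      end
  end.

Definition trel (t : twisted_type) (hb : CC) (x : freeRing (tgen t hb)) : Prop :=
  exists (a m : nat) (z : CC), in_Isig t a /\ (0 < m)%N /\
    x = tT t hb a m (z - 1) * tT t hb a m (z + 1)
        - (tT t hb a m.-1 z * tT t hb a m.+1 z + Mtw t hb a m z).

Definition TXtw (t : twisted_type) (hb : CC) := presentedRing (trel t hb).

Definition Ttw (t : twisted_type) (hb : CC) (a m : nat) (z : CC) : TXtw t hb :=
  @rq _ (trel t hb) (tT t hb a m z).

(* Main.v *)
From Pilot Require Import Defs.
From Stdlib Require Import Reals.
From HB Require Import structures.
From mathcomp Require Import all_boot all_order all_algebra.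
From mathcomp Require Import complex.
From mathcomp Require Import boolp Rstruct.
From mathcomp Require Import ring lra zify.
Import GRing.Theory Num.Theory.
Local Open Scope ring_scope.
Set Implicit Arguments.
Unset Strict Implicit.
Unset Printing Implicit Defensive.

Definition ismor (R S : comPzRingType) (h : R -> S) :=
  [/\ h 1 = 1, {morph h : x y / x + y} & {morph h : x y / x * y}].

Section MorFacts.
Variables (R S : comPzRingType) (h : R -> S).
Hypothesis hm : ismor h.
Lemma mor0 : h 0 = 0.
Proof. case: hm => _ hD _; apply: (@addrI _ (h 0)); by rewrite -hD !addr0. Qed.
Lemma morN x : h (- x) = - h x.
Proof. case: hm => _ hD _; apply: (@addrI _ (h x)); by rewrite -hD !subrr mor0. Qed.
Lemma morB x y : h (x - y) = h x - h y.
Proof. by case: hm => _ hD _; rewrite hD morN. Qed.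
Lemma morM x y : h (x * y) = h x * h y.
Proof. by case: hm. Qed.
Lemma morD x y : h (x + y) = h x + h y.
Proof. by case: hm. Qed.
Lemma mor1 : h 1 = 1.
Proof. by case: hm. Qed.
Lemma mor_sum (I : Type) (s : seq I) F : h (\sum_(i <- s) F i) = \sum_(i <- s) h (F i).
Proof. by apply: (big_morph h morD mor0). Qed.
Lemma mor_prod (I : Type) (s : seq I) (P : pred I) F :
  h (\prod_(i <- s | P i) F i) = \prod_(i <- s | P i) h (F i).
Proof. by apply: (big_morph h morM mor1). Qed.
End MorFacts.

Lemma ismor_comp (R S U : comPzRingType) (h : R -> S) (k : S -> U) :
  ismor h -> ismor k -> ismor (k \o h).
Proof.
move=> [h1 hD hM] [k1 kD kM]; split=> [|x y|x y] /=; by rewrite ?h1 ?hD ?hM.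
Qed.

Section QuotLift.
Variables (R S : comPzRingType) (P : R -> Prop).

Lemma rq_ismor : ismor (@rq R P).
Proof.
split=> // x y.
  by rewrite -rq_addE.
by rewrite -rq_mulE.
Qed.

Lemma rq_ind (Q : ringQuot P -> Prop) : (forall x, Q (rq P x)) -> forall q, Q q.
Proof. by move=> H; apply: quot_ind. Qed.

Lemma rq_gen (x : R) : P x -> rq P x = 0.
Proof.
move=> Px; apply: (qpi_eq (iqrel_equiv P)); rewrite /iqrel subr0.
by exists [:: (1, x)]; split=> [p|]; rewrite ?inE ?big_seq1 ?mul1r // => /eqP ->.
Qed.

Variable h : R -> S.
Hypothesis hm : ismor h.
Hypothesis hP : forall x, P x -> h x = 0.

Lemma h_ideal x : in_ideal_gen P x -> h x = 0.
Proof.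
move=> [s [hs ->]]; rewrite (mor_sum hm) big1_seq // => p /andP[_ /hs Pp].
by rewrite (morM hm) (hP Pp) mulr0.
Qed.

Definition qlift (q : ringQuot P) : S := h (qrepr q).

Lemma qlift_rq x : qlift (rq P x) = h x.
Proof.
have := h_ideal (@rq_rel _ P x); rewrite (morB hm) => /eqP.
by rewrite subr_eq0 => /eqP.
Qed.

Lemma qlift_ismor : ismor qlift.
Proof.
split.
- by rewrite -[1]/(rq P 1) qlift_rq (mor1 hm).
- elim/rq_ind=> x; elim/rq_ind=> y.
  by rewrite -(morD (rq_ismor)) !qlift_rq (morD hm).
- elim/rq_ind=> x; elim/rq_ind=> y.
  by rewrite -(morM (rq_ismor)) !qlift_rq (morM hm).
Qed.
End QuotLift.

Section FreeLift.
Variables (G : Type) (R : comPzRingType) (phi psi : G -> R).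
Hypothesis phipsi : forall g, phi g * psi g = 1.

Fixpoint feval (x : fterm G) : R :=
  match x with
  | fVar g => phi g | fInv g => psi g | fZero => 0 | fOne => 1
  | fAdd x y => feval x + feval y | fOpp x => - feval x
  | fMul x y => feval x * feval y end.

Lemma feval_cong x y : fcong x y -> feval x = feval y.
Proof.
elim=> {x y} /=.
- by [].
- by move=> x y _ ->.
- by move=> x y z _ -> _ ->.
- by move=> x x' y y' _ -> _ ->.
- by move=> x x' _ ->.
- by move=> x x' y y' _ -> _ ->.
- by move=> x y z; rewrite addrA.
- by move=> x y; rewrite addrC.
- by move=> x; rewrite add0r.
- by move=> x; rewrite addNr.
- by move=> x y z; rewrite mulrA.
- by move=> x y; rewrite mulrC.
- by move=> x; rewrite mul1r.
- by move=> x y z; rewrite mulrDl.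
- by move=> g; rewrite phipsi.
Qed.

Definition flift (q : freeRing G) : R := feval (qrepr q).

Lemma flift_pi x : flift (qpi (@fcong G) x) = feval x.
Proof. exact/feval_cong/frep_cong. Qed.

Lemma flift_ismor : ismor flift.
Proof.
split.
- by rewrite -[1]/(qpi (@fcong G) (fOne G)) flift_pi.
- elim/quot_ind=> x; elim/quot_ind=> y.
  by rewrite -[_ + _]/(fr_add _ _) fr_addE !flift_pi.
- elim/quot_ind=> x; elim/quot_ind=> y.
  by rewrite -[_ * _]/(fr_mul _ _) fr_mulE !flift_pi.
Qed.

Lemma flift_gen g : flift (fgen g) = phi g.
Proof. by rewrite /fgen flift_pi. Qed.
End FreeLift.

Lemma free_ext (G : Type) (R : comPzRingType) (h1 h2 : freeRing G -> R) :
  ismor h1 -> ismor h2 -> (forall g, h1 (fgen g) = h2 (fgen g)) -> h1 =1 h2.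
Proof.
move=> m1 m2 hg; elim/quot_ind=> x.
have inv : forall h : freeRing G -> R, ismor h -> forall g, h (fgen g) * h (fgen_inv g) = 1.
  move=> h hm g; rewrite -(morM hm) -(mor1 hm); congr h.
  rewrite -[_ * _]/(fr_mul _ _) fr_mulE.
  change (qpi (@fcong G) (fMul (fVar g) (fInv g)) = qpi (@fcong G) (fOne G)).
  by apply: (qpi_eq (@fcong_equiv G)); apply: fc_inv.
elim: x.
- exact: hg.
- move=> g; have e1 := inv _ m1 g; have e2 := inv _ m2 g.
  rewrite -[qpi _ (fInv g)]/(fgen_inv g).
  by rewrite -[h1 _]mulr1 -e2 -hg mulrA [h1 (fgen_inv g) * _]mulrC e1 mul1r.
- by change (h1 0 = h2 0); rewrite (mor0 m1) (mor0 m2).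
- by change (h1 1 = h2 1); rewrite (mor1 m1) (mor1 m2).
- move=> x ex y ey; rewrite -fr_addE; change (h1 ((qpi _ x : freeRing G) + qpi _ y) = h2 ((qpi _ x : freeRing G) + qpi _ y)).
  by rewrite (morD m1) (morD m2) ex ey.
- move=> x ex; rewrite -fr_oppE; change (h1 (- (qpi _ x : freeRing G)) = h2 (- (qpi _ x : freeRing G))).
  by rewrite (morN m1) (morN m2) ex.
- move=> x ex y ey; rewrite -fr_mulE; change (h1 ((qpi _ x : freeRing G) * qpi _ y) = h2 ((qpi _ x : freeRing G) * qpi _ y)).
  by rewrite (morM m1) (morM m2) ex ey.
Qed.

Notation sgm := Pilot.Defs.sigma.
Arguments Omega : simpl never.
Arguments twopii : simpl never.

Definition rho t a : nat :=
  match t with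
  | A2odd r => if (a <= r)%N then a else (2*r - a)%N
  | A2even r => if (a <= r)%N then a else ((2*r).+1 - a)%N
  | D2 r => if a == r.+1 then r else a
  | E62 => match a with 6 => 1 | 5 => 2 | _ => a end
  | D43 => match a with 3 => 1 | 4 => 1 | _ => a end
  end%N.

Definition kk t a : nat :=
  match t with
  | A2odd r | A2even r => if (a <= r)%N then 0 else 1
  | D2 r => if a == r.+1 then 1 else 0
  | E62 => match a with 6 | 5 => 1 | _ => 0 end
  | D43 => match a with 3 => 1 | 4 => 2 | _ => 0 end
  end%N.

Definition nbl t a : seq nat :=
  match t with
  | A2odd _ | A2even _ => [:: a.-1; a.+1]
  | D2 r => if (a <= r.-2)%N then [:: a.-1; a.+1]
            else if a == r.-1 then [:: r.-2; r; r.+1] else [:: r.-1]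
  | E62 => match a with 1 => [:: 2] | 2 => [:: 1; 3] | 3 => [:: 2; 5; 4]
           | 4 => [:: 3] | 5 => [:: 3; 6] | 6 => [:: 5] | _ => [::] end
  | D43 => match a with 1 => [:: 2] | 2 => [:: 1; 3; 4] | 3 => [:: 2]
           | 4 => [:: 2] | _ => [::] end
  end%N.

Definition MtwE (R : comPzRingType) t (O : CC) (T : nat -> CC -> R) (a : nat) (z : CC) : R :=
  match t with
  | A2odd r =>
      if (a <= r.-1)%N then T a.-1 z * T a.+1 z
      else T r.-1 z * T r.-1 (z + O)
  | A2even r =>
      if (a <= r.-1)%N then T a.-1 z * T a.+1 z
      else T r.-1 z * T r (z + O)
  | D2 r =>
      if (a <= r.-2)%N then T a.-1 z * T a.+1 z
      else if a == r.-1 then T r.-2 z * T r z * T r (z + O)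
      else T r.-1 z
  | E62 =>
      match a with
      | 1 => T 2 z
      | 2 => T 1 z * T 3 z
      | 3 => T 2 z * T 2 (z + O) * T 4 z
      | _ => T 3 z
      end
  | D43 =>
      match a with
      | 1 => T 2 z
      | _ => T 1 z * T 1 (z - O) * T 1 (z + O)
      end
  end.

Ltac fld := field; repeat (apply/andP; split); try assumption.

Section AbsW.
Variables (t : twisted_type) (hb : CC) (R : comPzRingType).
Hypothesis tv : tt_valid t.
Hypothesis hb0 : hb != 0.
Local Notation O := (Omega t hb).
Variable Phi : nat -> CC -> R.
Hypothesis PhiI : forall b w, ~~ in_Isig t b -> Phi b w = 1.
Hypothesis PhiP : forall b w w' (j : int),
  w - w' = j%:~R * (twopii / ((kappa_a t b)%:R * hb)) -> Phi b w = Phi b w'.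

Lemma PhiE1 b w w' (j : int) : sgm t b = b -> w = w' + j%:~R * O -> Phi b w = Phi b w'.
Proof.
move=> sb ->; apply: (PhiP (j := j)); rewrite /kappa_a sb eqxx /Omega; ring.
Qed.
Lemma PhiE2 b w w' (j : int) : sgm t b != b ->
  w = w' + j%:~R * ((kappa t)%:R * O) -> Phi b w = Phi b w'.
Proof.
move=> /negbTE sb ->; apply: (PhiP (j := j)); rewrite /kappa_a sb /Omega.
have k0 : (kappa t)%:R != 0 :> CC by rewrite pnatr_eq0; case: (t).
fld.
Qed.

Lemma PhiE1' b b' w w' (j : int) : b = b' -> sgm t b = b -> w = w' + j%:~R * O -> Phi b w = Phi b' w'.
Proof. move=> <-; exact: PhiE1. Qed.
Lemma PhiE2' b b' w w' (j : int) : b = b' -> sgm t b != b ->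
  w = w' + j%:~R * ((kappa t)%:R * O) -> Phi b w = Phi b' w'.
Proof. move=> <-; exact: PhiE2. Qed.
Lemma PhiC b b' w w' : b = b' -> w = w' -> Phi b w = Phi b' w'.
Proof. by move=> -> ->. Qed.

Ltac sgmsolve := simpl; repeat (case: ifP => ?); lia.

Ltac solveW E1 E2 := first
 [ by apply: PhiC; [lia|ring]
 | by apply: (E1 _ _ _ _ (-1)); [lia|sgmsolve|ring]
 | by apply: (E1 _ _ _ _ 1); [lia|sgmsolve|ring]
 | by apply: (E1 _ _ _ _ 2); [lia|sgmsolve|ring]
 | by apply: (E1 _ _ _ _ (-2)); [lia|sgmsolve|ring]
 | by apply: (E2 _ _ _ _ (-1)); [lia|sgmsolve|ring]
 | by apply: (E2 _ _ _ _ 1); [lia|sgmsolve|ring] ].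

Definition FF a z := Phi (rho t a) (z - (kk t a)%:R * O).

Lemma T5W a z : is_node t a -> FF a z = FF (sgm t a) (z + O).
Proof.
rewrite /FF /is_node.
case: t tv PhiE1' PhiE2' => [r|r|r||] tv' E1 E2 ha; rewrite /= in tv' ha E1 E2.
- rewrite /rho /kk /=; repeat case: ifP => ?; try (exfalso; lia); solveW E1 E2.
- rewrite /rho /kk /=; repeat case: ifP => ?; try (exfalso; lia); solveW E1 E2.
- cbv beta iota delta [Defs.sigma]; repeat case: ifP => ?;
  rewrite /rho /kk /=; repeat case: ifP => ?; try (exfalso; lia); solveW E1 E2.
- move: ha; rewrite /rho /kk; case: a => [|[|[|[|[|[|[|a]]]]]]] //= _; solveW E1 E2.
- move: ha; rewrite /rho /kk; case: a => [|[|[|[|[|a]]]]] //= _; solveW E1 E2.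
Qed.

Ltac finW E1 E2 :=
  first [ solveW E1 E2
        | by congr (_ * _); solveW E1 E2
        | by rewrite [LHS]mulrC; congr (_ * _); solveW E1 E2
        | by rewrite [LHS]mulrA; congr (_ * _ * _); solveW E1 E2 ].

Lemma T7W a z : is_node t a ->
  \prod_(b <- nbl t a) FF b z = MtwE t O Phi (rho t a) (z - (kk t a)%:R * O).
Proof.
rewrite /FF /is_node.
case: t tv PhiE1' PhiE2' => [r|r|r||] tv' E1 E2 ha; rewrite /= in tv' ha E1 E2;
  cbv beta iota delta [MtwE nbl rho kk]; rewrite ?big_cons ?big_nil ?mulr1.
- case: (leqP a r) => ? /=; repeat case: ifP => ?;
  try (exfalso; lia); finW E1 E2.
- case: (leqP a r) => ? /=; repeat case: ifP => ?;
  try (exfalso; lia); finW E1 E2.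
- case: (a =P r.+1) => [->|?]; rewrite ?eqxx /=;
  repeat case: ifP => ?; try (exfalso; lia); rewrite ?big_cons ?big_nil ?mulr1 /=; repeat case: ifP => ?; try (exfalso; lia); finW E1 E2.
- move: ha; case: a => [|[|[|[|[|[|[|a]]]]]]] //= _; rewrite ?big_cons ?big_nil ?mulr1 /=; finW E1 E2.
- move: ha; case: a => [|[|[|[|[|a]]]]] //= _; rewrite ?big_cons ?big_nil ?mulr1 /=; finW E1 E2.
Qed.

End AbsW.

Section AbsQ.
Variables (t : twisted_type) (hb : CC) (R : comPzRingType).
Hypothesis tv : tt_valid t.
Hypothesis hb0 : hb != 0.
Local Notation O := (Omega t hb).
Variable Psi : nat -> CC -> R.
Hypothesis PsiN : forall b w, ~~ is_node t b -> Psi b w = 1.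
Hypothesis PsiS : forall a w, is_node t a -> Psi a w = Psi (sgm t a) (w + O).
Hypothesis PsiP : forall b w w' (j : int),
  w - w' = j%:~R * (twopii / hb) -> Psi b w = Psi b w'.

Lemma PsiP' b b' w w' (j : int) : b = b' ->
  w = w' + j%:~R * ((kappa t)%:R * O) -> Psi b w = Psi b' w'.
Proof.
move=> <- ->; apply: (@PsiP _ _ _ j); rewrite /Omega.
have k0 : (kappa t)%:R != 0 :> CC by rewrite pnatr_eq0; case: (t).
fld.
Qed.
Lemma PsiSP a b' w w' (j : int) : is_node t a -> b' = sgm t a ->
  w + O = w' + j%:~R * ((kappa t)%:R * O) -> Psi a w = Psi b' w'.
Proof. by move=> na -> e; rewrite (PsiS _ na); apply: (PsiP' (j := j)). Qed.
Lemma PsiSS a b' w w' (j : int) : is_node t a -> is_node t (sgm t a) -> b' = sgm t (sgm t a) ->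
  w + O + O = w' + j%:~R * ((kappa t)%:R * O) -> Psi a w = Psi b' w'.
Proof.
by move=> na nsa -> e; rewrite (PsiS _ na) (PsiS _ nsa); apply: (PsiP' (j := j)).
Qed.
Lemma PsiC b b' w w' : b = b' -> w = w' -> Psi b w = Psi b' w'.
Proof. by move=> -> ->. Qed.

Ltac sgmsolve := simpl; repeat (case: ifP => ?); lia.

Ltac solveQ1 E1 E2 E3 := first
 [ by apply: PsiC; [lia|ring]
 | by apply: (E1 _ _ _ _ 0); [rewrite /is_node /=; lia|sgmsolve|ring]
 | by apply: (E1 _ _ _ _ 1); [rewrite /is_node /=; lia|sgmsolve|ring]
 | by apply: (E1 _ _ _ _ (-1)); [rewrite /is_node /=; lia|sgmsolve|ring]
 | by apply: (E2 _ _ _ _ 0); [rewrite /is_node /=; lia|rewrite /is_node /=; repeat (case: ifP => ?); lia|sgmsolve|ring]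
 | by apply: (E2 _ _ _ _ 1); [rewrite /is_node /=; lia|rewrite /is_node /=; repeat (case: ifP => ?); lia|sgmsolve|ring]
 | by apply: (E2 _ _ _ _ (-1)); [rewrite /is_node /=; lia|rewrite /is_node /=; repeat (case: ifP => ?); lia|sgmsolve|ring]
 | by apply: (E3 _ _ _ _ 1); [lia|ring]
 | by apply: (E3 _ _ _ _ (-1)); [lia|ring]
 | by symmetry; apply: PsiN; rewrite /is_node /=; lia
 | by apply: PsiN; rewrite /is_node /=; lia ].

Ltac solveQ E1 E2 E3 := first [ solveQ1 E1 E2 E3 | symmetry; solveQ1 E1 E2 E3 ].

Ltac finQ E1 E2 E3 :=
  first [ solveQ E1 E2 E3
        | by congr (_ * _); solveQ E1 E2 E3
        | by rewrite [RHS]mulrC; congr (_ * _); solveQ E1 E2 E3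
        | by rewrite [RHS]mulrA; congr (_ * _ * _); solveQ E1 E2 E3 ].

Lemma T6Q a z : is_node t a -> Psi (rho t a) (z - (kk t a)%:R * O) = Psi a z.
Proof.
rewrite /is_node.
case: t tv PsiSP PsiSS PsiP' => [r|r|r||] tv' E1 E2 E3 ha; rewrite /= in tv' ha E1 E2 E3;
  cbv beta iota delta [rho kk].
- case: (leqP a r) => ? /=; solveQ E1 E2 E3.
- case: (leqP a r) => ? /=; solveQ E1 E2 E3.
- case: (a =P r.+1) => [->|?]; rewrite ?eqxx /=; solveQ E1 E2 E3.
- move: ha; case: a => [|[|[|[|[|[|[|a]]]]]]] //= _; solveQ E1 E2 E3.
- move: ha; case: a => [|[|[|[|[|a]]]]] //= _; solveQ E1 E2 E3.
Qed.

Definition Psi' b w := if in_Isig t b then Psi b w else 1.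
Arguments Psi' : simpl never.
Lemma Psi'E b w : in_Isig t b || ~~ is_node t b -> Psi' b w = Psi b w.
Proof. by rewrite /Psi'; case: ifP => //= _ /PsiN ->. Qed.

Ltac side := rewrite /in_Isig /is_node /=; lia.

Lemma T8Q a z : in_Isig t a ->
  MtwE t O Psi' a z = \prod_(b <- nbl t a) Psi b z.
Proof.
case: t tv PsiSP PsiSS PsiP' Psi'E => [r|r|r||] tv' E1 E2 E3 PE ha; rewrite /= in tv' ha E1 E2 E3;
  cbv beta iota delta [MtwE nbl].
- rewrite ?big_cons ?big_nil ?mulr1 /=; repeat case: ifP => ?; try (exfalso; lia);
  rewrite !PE; try side; finQ E1 E2 E3.
- rewrite ?big_cons ?big_nil ?mulr1 /=; repeat case: ifP => ?; try (exfalso; lia);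
  rewrite !PE; try side; finQ E1 E2 E3.
- repeat case: ifP => ?; try (exfalso; lia);
  rewrite ?big_cons ?big_nil ?mulr1 /= !PE; try side; finQ E1 E2 E3.
- move: ha; case: a => [|[|[|[|[|a]]]]] //= _; rewrite ?big_cons ?big_nil ?mulr1 /= !PE; try side; finQ E1 E2 E3.
- move: ha; case: a => [|[|[|a]]] //= _; rewrite ?big_cons ?big_nil ?mulr1 /= !PE; try side; finQ E1 E2 E3.
Qed.

End AbsQ.
Lemma T1 t b : in_Isig t b -> rho t b = b /\ kk t b = 0%N.
Proof.
case: t => [r|r|r||] /=; rewrite /rho /kk.
- by move=> h; rewrite (_ : (b <= r)%N = true) //; lia.
- by move=> h; rewrite (_ : (b <= r)%N = true) //; lia.
- by move=> h; rewrite (_ : (b == r.+1) = false) //; lia.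
- by case: b => [|[|[|[|[|b]]]]].
- by case: b => [|[|[|b]]].
Qed.

Lemma T2 t a : tt_valid t -> is_node t a -> in_Isig t (rho t a).
Proof.
rewrite /is_node; case: t => [r|r|r||] /= tv ha; rewrite /rho.
- by case: ifP => ? /=; lia.
- by case: ifP => ? /=; lia.
- by case: ifP => ? /=; lia.
- by move: ha; case: a => [|[|[|[|[|[|[|a]]]]]]].
- by move: ha; case: a => [|[|[|[|[|a]]]]].
Qed.

Lemma T2b t a : ~~ is_node t a -> ~~ in_Isig t (rho t a).
Proof.
rewrite /is_node; case: t => [r|r|r||] /= ha; rewrite /rho.
- by case: ifP => ? /=; lia.
- by case: ifP => ? /=; lia.
- by case: ifP => ? /=; lia.
- by move: ha; case: a => [|[|[|[|[|[|[|a]]]]]]].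
- by move: ha; case: a => [|[|[|[|[|a]]]]].
Qed.

Lemma T3 t b : tt_valid t -> in_Isig t b -> is_node t b.
Proof.
rewrite /is_node; case: t => [r|r|r||] /= tv hb //.
- lia.
- lia.
- lia.
- by move: hb; case: b => [|[|[|[|[|b]]]]].
- by move: hb; case: b => [|[|[|b]]].
Qed.

Lemma prod_sel (R : comPzRingType) (r s : seq nat) (P : pred nat) (G : nat -> R) :
  uniq r -> uniq s -> {in r, forall b, P b = (b \in s)} ->
  (forall b, b \in s -> b \notin r -> G b = 1) ->
  \prod_(b <- r | P b) G b = \prod_(b <- s) G b.
Proof.
move=> ur us hP hG.
rewrite -big_filter.
rewrite [RHS](bigID (fun b => b \in r)) /= [X in _ * X]big1_seq ?mulr1; last first.
  by move=> b /andP[/negP nb bs]; apply: hG => //; apply/negP.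
rewrite -[RHS]big_filter; apply: perm_big; apply: uniq_perm; rewrite ?filter_uniq //.
move=> b; rewrite !mem_filter; apply/andP/andP => [[Pb br]|[br bs]].
  by split=> //; rewrite -hP.
by split=> //; rewrite hP.
Qed.

Lemma prod_nbl (R : comPzRingType) t a (G : nat -> R) : tt_valid t -> is_node t a ->
  (forall b, b \in nbl t a -> ~~ is_node t b -> G b = 1) ->
  \prod_(1 <= b < (rankN t).+1 | adj t a b) G b = \prod_(b <- nbl t a) G b.
Proof.
move=> tv ha hG; rewrite /index_iota subSS subn0; apply: prod_sel.
- exact: iota_uniq.
- move: ha; rewrite /is_node; case: t tv {hG} => [r|r|r||] /= tv ha.
  + rewrite inE; lia.
  + rewrite inE; lia.
  + case: ifP => ?; first (rewrite /= inE; lia).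
    case: ifP => ? //=; rewrite !inE; lia.
  + by move: ha; case: a => [|[|[|[|[|[|[|a]]]]]]].
  + by move: ha; case: a => [|[|[|[|[|a]]]]].
- move=> b hb; rewrite /adj; move: (hb); rewrite mem_iota => hb'.
  move: ha; rewrite /is_node; case: t tv {hG} hb hb' => [r|r|r||] /= tv hb hb' ha.
  + rewrite !inE; lia.
  + rewrite !inE; lia.
  + case: ifP => ?; first (rewrite !inE; lia).
    case: ifP => ?; rewrite !inE; lia.
  + apply/eqP; clear hb'; move: b hb; apply/allP.
    by move: ha; case: a => [|[|[|[|[|[|[|a]]]]]]].
  + apply/eqP; clear hb'; move: b hb; apply/allP.
    by move: ha; case: a => [|[|[|[|[|a]]]]].
- move=> b bs; rewrite mem_iota => nb; apply: hG => //.
Qed.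

Lemma mg_false (X : bool) (T : Type) (F : X = true -> T) (d : T) (b : bool) (e : X = b) :
  b = false -> (match b as c return X = c -> T with true => F | false => fun _ => d end) e = d.
Proof. by case: b e. Qed.
Lemma mg_true (X : bool) (T : Type) (F : X = true -> T) (d : T) (b : bool) (e : X = b) (P : X = true) :
  (match b as c return X = c -> T with true => F | false => fun _ => d end) e = F P.
Proof. case: b e => e; first by congr F; exact: eq_irrelevance. by exfalso; move: P; rewrite e. Qed.

Definition uTinv (t : twisted_type) (hb : CC) (a m : nat) (z : CC)
  : freeRing (ugen t hb) :=
  match is_node t a && (0 < m)%N as b
        return is_node t a && (0 < m)%N = b -> freeRing (ugen t hb) with
  | true => fun H => fgen_inv (UGen t hb a m H (cproj hb z))
  | false => fun _ => 1
  end erefl.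

Definition tTinv (t : twisted_type) (hb : CC) (b m : nat) (z : CC)
  : freeRing (tgen t hb) :=
  match in_Isig t b && (0 < m)%N as c
        return in_Isig t b && (0 < m)%N = c -> freeRing (tgen t hb) with
  | true => fun H => fgen_inv (TGen t hb b m H (cproj ((kappa_a t b)%:R * hb) z))
  | false => fun _ => 1
  end erefl.

Lemma uT_false t hb a m z : ~~ (is_node t a && (0<m)%N) -> uT t hb a m z = 1.
Proof. by move=> /negbTE H; rewrite /uT; apply: mg_false. Qed.
Lemma uT_true t hb a m z (P : is_node t a && (0<m)%N) :
  uT t hb a m z = fgen (UGen t hb a m P (cproj hb z)).
Proof. rewrite /uT; exact: mg_true. Qed.
Lemma uTinv_false t hb a m z : ~~ (is_node t a && (0<m)%N) -> uTinv t hb a m z = 1.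
Proof. by move=> /negbTE H; rewrite /uTinv; apply: mg_false. Qed.
Lemma uTinv_true t hb a m z (P : is_node t a && (0<m)%N) :
  uTinv t hb a m z = fgen_inv (UGen t hb a m P (cproj hb z)).
Proof. rewrite /uTinv; exact: mg_true. Qed.
Lemma tT_false t hb a m z : ~~ (in_Isig t a && (0<m)%N) -> tT t hb a m z = 1.
Proof. by move=> /negbTE H; rewrite /tT; apply: mg_false. Qed.
Lemma tT_true t hb a m z (P : in_Isig t a && (0<m)%N) :
  tT t hb a m z = fgen (TGen t hb a m P (cproj ((kappa_a t a)%:R * hb) z)).
Proof. rewrite /tT; exact: mg_true. Qed.
Lemma tTinv_false t hb a m z : ~~ (in_Isig t a && (0<m)%N) -> tTinv t hb a m z = 1.
Proof. by move=> /negbTE H; rewrite /tTinv; apply: mg_false. Qed.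
Lemma tTinv_true t hb a m z (P : in_Isig t a && (0<m)%N) :
  tTinv t hb a m z = fgen_inv (TGen t hb a m P (cproj ((kappa_a t a)%:R * hb) z)).
Proof. rewrite /tTinv; exact: mg_true. Qed.

Lemma fgenV (G : Type) (g : G) : fgen g * fgen_inv g = 1.
Proof.
rewrite -[_ * _]/(fr_mul _ _) fr_mulE.
change (qpi (@fcong G) (fMul (fVar g) (fInv g)) = qpi (@fcong G) (fOne G)).
by apply: (qpi_eq (@fcong_equiv G)); apply: fc_inv.
Qed.

Lemma uTV t hb a m z : uT t hb a m z * uTinv t hb a m z = 1.
Proof.
case H: (is_node t a && (0 < m)%N).
  by rewrite (uT_true _ _ H) (uTinv_true _ _ H) fgenV.
by rewrite uT_false ?uTinv_false ?H // mulr1.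
Qed.
Lemma tTV t hb a m z : tT t hb a m z * tTinv t hb a m z = 1.
Proof.
case H: (in_Isig t a && (0 < m)%N).
  by rewrite (tT_true _ _ H) (tTinv_true _ _ H) fgenV.
by rewrite tT_false ?tTinv_false ?H // mulr1.
Qed.

Lemma cmod_equiv c : Pilot.Defs.equivalence_rel (cmod_rel c).
Proof.
split.
- by move=> x; exists 0; rewrite subrr mul0r.
- by move=> x y [k e]; exists (- k); rewrite -opprB e mulrNz mulNr.
- move=> x y z [k e] [l f]; exists (k + l).
  rewrite (_ : x - z = (x - y) + (y - z)); last by ring.
  by rewrite e f mulrzDr mulrDl.
Qed.

Lemma cproj_eq c z z' (j : int) : z - z' = j%:~R * (twopii / c) -> cproj c z = cproj c z'.
Proof. by move=> e; apply: (qpi_eq (cmod_equiv c)); exists j. Qed.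

Lemma cproj_repr c z : exists j : int, qrepr (cproj c z) - z = j%:~R * (twopii / c).
Proof.
apply: (qpi_eq_inv (cmod_equiv c)); rewrite qreprK //.
Qed.

Lemma cproj_qrepr c (u : Cmod c) : cproj c (qrepr u) = u.
Proof. exact: qreprK. Qed.

Lemma MtwE_mor (t : twisted_type) hb (S : comPzRingType) (h : freeRing (tgen t hb) -> S) a m z :
  ismor h -> h (Mtw t hb a m z) = MtwE t (Omega t hb) (fun b w => h (tT t hb b m w)) a z.
Proof.
rewrite /Mtw /MtwE.
case: t h => [r|r|r||] h hm /=; repeat case: ifP => _; rewrite ?(morM hm) //.
- by case: a => [|[|[|[|a]]]]; rewrite /= ?(morM hm).
- by case: a => [|[|a]]; rewrite /= ?(morM hm).
Qed.

Section Main.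
Variables (t : twisted_type) (hb : CC).
Hypothesis tv : tt_valid t.
Hypothesis hb0 : hb != 0.
Local Notation Om := (Omega t hb).
Local Notation W := (TXtw t hb).
Local Notation TX' := (TX t hb).
Local Notation Q := (TXquot t hb).
Local Notation Tw := (Ttw t hb).

Lemma kappa0 : (kappa t)%:R != 0 :> CC.
Proof. by rewrite pnatr_eq0; case: (t). Qed.
Lemma kappaa0 b : (kappa_a t b)%:R != 0 :> CC.
Proof. by rewrite pnatr_eq0 /kappa_a; case: ifP => _ //; case: (t). Qed.

Lemma Tw_triv b m z : ~~ (in_Isig t b && (0 < m)%N) -> Tw b m z = 1.
Proof. by move=> h; rewrite /Ttw tT_false. Qed.

Lemma Tw_per b m w w' (j : int) :
  w - w' = j%:~R * (twopii / ((kappa_a t b)%:R * hb)) -> Tw b m w = Tw b m w'.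
Proof.
move=> e; case H: (in_Isig t b && (0 < m)%N); last by rewrite !Tw_triv ?H.
by rewrite /Ttw !(tT_true _ _ H) (cproj_eq e).
Qed.

Lemma Tw_per1 b m w w' (j : int) :
  w - w' = j%:~R * (twopii / hb) -> Tw b m w = Tw b m w'.
Proof.
move=> e; apply: (@Tw_per _ _ _ _ (j * (kappa_a t b)%:Z)); rewrite e intrM.
rewrite -[((kappa_a t b)%:Z)%:~R]/((kappa_a t b)%:R).
have := kappaa0 b; move=> k0; fld.
Qed.

Lemma Tw_Isig b m z : in_Isig t b -> FF t hb (fun b w => Tw b m w) b z = Tw b m z.
Proof. by move=> /T1 [e1 e2]; rewrite /FF e1 e2 mul0r subr0. Qed.

Definition phiW (g : ugen t hb) : W :=
  Tw (rho t (@ug_a t hb g)) (@ug_m t hb g) (qrepr (@ug_u t hb g) - (kk t (@ug_a t hb g))%:R * Om).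
Definition psiW (g : ugen t hb) : W :=
  rq _ (tTinv t hb (rho t (@ug_a t hb g)) (@ug_m t hb g) (qrepr (@ug_u t hb g) - (kk t (@ug_a t hb g))%:R * Om)).
Lemma phipsiW g : phiW g * psiW g = 1.
Proof. by rewrite /phiW /psiW /Ttw -(morM (@rq_ismor _ _)) tTV. Qed.

Definition f0 := flift phiW psiW.
Lemma f0_mor : ismor f0.
Proof. exact: flift_ismor phipsiW. Qed.

Lemma f0_uT a m z : f0 (uT t hb a m z) = FF t hb (fun b w => Tw b m w) a z.
Proof.
rewrite /FF; case H: (is_node t a && (0 < m)%N).
  rewrite (uT_true _ _ H) /f0 (flift_gen phipsiW) /phiW /=.
  have [j e] := cproj_repr hb z.
  apply: (@Tw_per1 _ _ _ _ j); rewrite -e; ring.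
rewrite uT_false ?H // (mor1 f0_mor) Tw_triv //.
apply/negP => /andP [hI hm]; move: H; rewrite hm andbT => /negbT /T2b.
by rewrite hI.
Qed.

Lemma f0_urel x : urel t hb x -> f0 x = 0.
Proof.
move=> [a [m [z [na [m0 ->]]]]].
rewrite (morB f0_mor) (morD f0_mor) !(morM f0_mor) (mor_prod f0_mor) !f0_uT.
under eq_bigr do rewrite f0_uT.
rewrite (prod_nbl tv na); last first.
  by move=> b _ nb; rewrite /FF Tw_triv // (negbTE (T2b nb)).
have PP : forall b w w' (j : int),
  w - w' = j%:~R * (twopii / ((kappa_a t b)%:R * hb)) -> Tw b m w = Tw b m w'.
  by move=> b w w' j; apply: Tw_per.
rewrite (T7W (Phi := fun b w => Tw b m w) tv hb0 PP z na).
set c := rho t a; set w := z - (kk t a)%:R * Om.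
have cI : in_Isig t c by apply: T2.
have rel : trel t hb (tT t hb c m (w - 1) * tT t hb c m (w + 1)
        - (tT t hb c m.-1 w * tT t hb c m.+1 w + Mtw t hb c m w)).
  by exists c, m, w.
have := rq_gen rel; rewrite (morB (@rq_ismor _ _)) (morD (@rq_ismor _ _)).
rewrite !(morM (@rq_ismor _ _)) (MtwE_mor _ _ _ (@rq_ismor _ _)).
rewrite /FF -/c -/w (_ : z - 1 - _ = w - 1); last by rewrite /w; ring.
by rewrite (_ : z + 1 - _ = w + 1) //; rewrite /w; ring.
Qed.

Definition f1 : TX' -> W := qlift f0.
Lemma f1_mor : ismor f1.
Proof. exact: (qlift_ismor f0_mor f0_urel). Qed.
Lemma f1_rq x : f1 (rq _ x) = f0 x.
Proof. exact: (qlift_rq f0_mor f0_urel). Qed.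

Lemma f1_J y : Jsig t hb y -> f1 y = 0.
Proof.
move=> [a [m [z [na [m0 ->]]]]].
have PP : forall b w w' (j : int),
  w - w' = j%:~R * (twopii / ((kappa_a t b)%:R * hb)) -> Tw b m w = Tw b m w'.
  by move=> b w w' j; apply: Tw_per.
by rewrite (morB f1_mor) /hatT !f1_rq !f0_uT (T5W (Phi := fun b w => Tw b m w) tv hb0 PP z na) subrr.
Qed.

Definition f : Q -> W := qlift f1.
Lemma f_mor : ismor f.
Proof. exact: (qlift_ismor f1_mor f1_J). Qed.
Lemma f_rq x : f (rq _ x) = f1 x.
Proof. exact: (qlift_rq f1_mor f1_J). Qed.

Definition rqq (x : freeRing (ugen t hb)) : Q := rq _ (rq (urel t hb) x).
Lemma rqq_mor : ismor rqq.
Proof. exact: ismor_comp (@rq_ismor _ _) (@rq_ismor _ _). Qed.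

Definition H b m z : Q := rqq (uT t hb b m z).

Lemma H_triv b m z : ~~ (is_node t b && (0 < m)%N) -> H b m z = 1.
Proof. by move=> h; rewrite /H uT_false // (mor1 rqq_mor). Qed.

Lemma H_per b m w w' (j : int) : w - w' = j%:~R * (twopii / hb) -> H b m w = H b m w'.
Proof.
move=> e; case Hb: (is_node t b && (0 < m)%N); last by rewrite !H_triv ?Hb.
by rewrite /H !(uT_true _ _ Hb) (cproj_eq e).
Qed.

Lemma H_sig a m z : is_node t a -> H a m z = H (sgm t a) m (z + Om).
Proof.
move=> na; case: (posnP m) => [->|m0]; first by rewrite !H_triv ?andbF.
have J : Jsig t hb (hatT t hb a m z - hatT t hb (sgm t a) m (z + Om)).
  by exists a, m, z.
by have /eqP := rq_gen J; rewrite (morB (@rq_ismor _ _)) subr_eq0 => /eqP.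
Qed.

Lemma H_perO b m w (j : int) : sgm t b = b -> is_node t b -> H b m (w + j%:~R * Om) = H b m w.
Proof.
move=> sb nb.
have step : forall w, H b m (w + Om) = H b m w by move=> w0; rewrite [RHS](H_sig _ w0 nb) sb.
have stepn : forall (n : nat) w, H b m (w + n%:R * Om) = H b m w.
  elim=> [|n IH] w0; first by rewrite mul0r addr0.
  by rewrite mulrSr mulrDl mul1r addrA step IH.
case: j => n.
  by rewrite -[(Posz n)%:~R]/(n%:R) stepn.
have e : w = (w + (Negz n)%:~R * Om) + n.+1%:R * Om.
  rewrite NegzE mulrNz; rewrite -[(Posz n.+1)%:~R]/(n.+1%:R); ring.
by rewrite [in RHS]e stepn.
Qed.

Lemma H_urel a m z : is_node t a -> (0 < m)%N ->
  H a m (z - 1) * H a m (z + 1) =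
  H a m.-1 z * H a m.+1 z + \prod_(1 <= b < (rankN t).+1 | adj t a b) H b m z.
Proof.
move=> na m0.
have U : urel t hb (uT t hb a m (z - 1) * uT t hb a m (z + 1)
        - (uT t hb a m.-1 z * uT t hb a m.+1 z
           + \prod_(1 <= b < (rankN t).+1 | adj t a b) uT t hb b m z)).
  by exists a, m, z.
have := rq_gen U => /(congr1 (rq (Jsig t hb))).
rewrite -/(rqq _) (morB rqq_mor) (morD rqq_mor) !(morM rqq_mor) (mor_prod rqq_mor).
by move/eqP; rewrite (mor0 (@rq_ismor _ _)) subr_eq0 => /eqP.
Qed.

Definition phiQ (g : tgen t hb) : Q := H (@tg_a t hb g) (@tg_m t hb g) (qrepr (@tg_u t hb g)).
Definition psiQ (g : tgen t hb) : Q := rqq (uTinv t hb (@tg_a t hb g) (@tg_m t hb g) (qrepr (@tg_u t hb g))).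
Lemma phipsiQ g : phiQ g * psiQ g = 1.
Proof. by rewrite /phiQ /psiQ /H -(morM rqq_mor) uTV (mor1 rqq_mor). Qed.

Definition g0 := flift phiQ psiQ.
Lemma g0_mor : ismor g0.
Proof. exact: flift_ismor phipsiQ. Qed.

Lemma g0_tT b m z : g0 (tT t hb b m z) = Psi' t (fun b w => H b m w) b z.
Proof.
rewrite /Psi'; case Hb: (in_Isig t b && (0 < m)%N).
  move/andP: (Hb) => [bI m0]; rewrite bI.
  rewrite (tT_true _ _ Hb) /g0 (flift_gen phipsiQ) /phiQ /=.
  have [j e] := cproj_repr ((kappa_a t b)%:R * hb) z.
  have nb := T3 tv bI.
  set q := qrepr (cproj ((kappa_a t b)%:R * hb) z) in e *.
  have -> : q = z + (q - z) by rewrite addrC subrK.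
  case sb: (sgm t b == b).
    rewrite /kappa_a sb -/(Omega t hb) in e.
    by rewrite e H_perO //; exact/eqP.
  rewrite /kappa_a sb mul1r in e.
  by apply: (@H_per _ _ _ _ j); rewrite (addrC z) addrK.
rewrite tT_false; last by rewrite Hb.
rewrite (mor1 g0_mor); case: ifP => bI; last by [].
have m0 : (0 < m)%N = false by move: Hb; rewrite bI.
by rewrite H_triv // m0 andbF.
Qed.

Lemma g0_trel x : trel t hb x -> g0 x = 0.
Proof.
move=> [a [m [z [aI [m0 ->]]]]].
rewrite (morB g0_mor) (morD g0_mor) !(morM g0_mor) (MtwE_mor _ _ _ g0_mor) !g0_tT.
have -> : (fun b w => g0 (tT t hb b m w)) = Psi' t (fun b w => H b m w).
  by apply/funext => b; apply/funext => w; rewrite g0_tT.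
have PN : forall b w, ~~ is_node t b -> H b m w = 1.
  by move=> b w nb; rewrite H_triv // (negbTE nb).
have PS : forall a w, is_node t a -> H a m w = H (sgm t a) m (w + Om).
  by move=> a0 w na; apply: H_sig.
have PP : forall b w w' (j : int), w - w' = j%:~R * (twopii / hb) -> H b m w = H b m w'.
  by move=> b w w' j; apply: H_per.
rewrite (T8Q (Psi := fun b w => H b m w) tv hb0 PN PS PP z aI).
rewrite /Psi' aI.
have na := T3 tv aI.
have PNb : forall b, b \in nbl t b -> ~~ is_node t b -> H b m z = 1.
  by move=> b _ nb; apply: PN.
have PNb' : forall b, b \in nbl t a -> ~~ is_node t b -> H b m z = 1.
  by move=> b _ nb; apply: PN.
rewrite (H_urel z na m0) (prod_nbl tv na PNb').
exact: subrr.
Qed.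

Definition g1 : W -> Q := qlift g0.
Lemma g1_mor : ismor g1.
Proof. exact: (qlift_ismor g0_mor g0_trel). Qed.
Lemma g1_rq x : g1 (rq _ x) = g0 x.
Proof. exact: (qlift_rq g0_mor g0_trel). Qed.

Lemma gf q : g1 (f q) = q.
Proof.
elim/rq_ind: q => x; elim/rq_ind: x => x.
suff E : (fun x => g1 (f (rqq x))) =1 rqq by exact: E x.
apply: free_ext; [exact: (ismor_comp rqq_mor (ismor_comp f_mor g1_mor)) | exact: rqq_mor | ].
move=> [a m P u].
rewrite /rqq f_rq f1_rq /f0 (flift_gen phipsiW) /phiW /Ttw g1_rq g0_tT.
have na : is_node t a by case/andP: P.
rewrite /Psi' (T2 tv na).
have PS : forall a w, is_node t a -> H a m w = H (sgm t a) m (w + Om).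
  by move=> a0 w na0; apply: H_sig.
have PP : forall b w w' (j : int), w - w' = j%:~R * (twopii / hb) -> H b m w = H b m w'.
  by move=> b w w' j; apply: H_per.
have /= -> := T6Q (Psi := fun b w => H b m w) tv hb0 PS PP (qrepr u) na.
by rewrite /H /rqq (uT_true _ _ P) cproj_qrepr.
Qed.

Lemma fg w : f (g1 w) = w.
Proof.
elim/rq_ind: w => x.
suff E : (fun x => f (g1 (rq (trel t hb) x))) =1 rq (trel t hb) by exact: E x.
apply: free_ext; [exact: (ismor_comp (@rq_ismor _ _) (ismor_comp g1_mor f_mor)) | exact: (@rq_ismor _ _) | ].
move=> [b m P u].
rewrite g1_rq /g0 (flift_gen phipsiQ) /phiQ /H /rqq f_rq f1_rq f0_uT.
have bI : in_Isig t b by case/andP: P.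
by rewrite Tw_Isig // /Ttw (tT_true _ _ P) cproj_qrepr.
Qed.

End Main.

Unset Implicit Arguments.

Theorem proposition9p5 (t : twisted_type) (hb : CC) :
  tt_valid t ->
  (forall q : rat, hb <> ratr q * twopii) ->
  exists f : {rmorphism TXquot t hb -> TXtw t hb},
    bijective f /\
    forall (a m : nat) (z : CC), in_Isig t a -> (0 < m)%N ->
      f (@rq _ (Jsig t hb) (hatT t hb a m z)) = Ttw t hb a m z.
Proof.
move=> tv hq.
have hb0 : hb != 0.
  apply/eqP => e; apply: (hq 0); by rewrite rmorph0 mul0r.
have fm := f_mor tv hb0.
have nm : nmod_morphism (@f t hb).
  by split; [exact: (mor0 fm) | exact: (morD fm)].
have mm : monoid_morphism (@f t hb).
  by split; [exact: (mor1 fm) | exact: (morM fm)].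
pose F := HB.pack_for {rmorphism TXquot t hb -> TXtw t hb} (@f t hb)
  (GRing.isNmodMorphism.Build _ _ (@f t hb) nm) (GRing.isMonoidMorphism.Build _ _ (@f t hb) mm).
exists F; split.
  exists (@g1 t hb) => x; [exact: (gf tv hb0) | exact: (fg tv hb0)].
move=> a m z aI m0.
rewrite /F /= /hatT (f_rq tv hb0) (f1_rq tv hb0) (f0_uT t hb0).
exact: (Tw_Isig hb m z aI).
Qed.
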